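(* Let $\mathbf{a}\in\mathbb{Z}_{\ge0}^n$ with $\mathbf{a}\neq\mathbf{0}$, let $0<\beta<1$, let $\epsilon$ satisfy $0<\epsilon<1$ and let $c_1>0$ with $0<c_1\epsilon<1$. If $1-\beta\le \dfrac{c_1\epsilon}{n\|\mathbf{a}\|_1}$, then $$(1-c_1\epsilon)\,\mathrm{Vol}(P_{\mathbf{a}})\le \mathrm{Vol}\Big(\bigcup_{k=0}^\infty Q_k\Big)\le \mathrm{Vol}(P_{\mathbf{a}}).$$
   Context: For $\mathbf{c}\in\mathbb{R}^n$, $r\ge 0$, the cross-polytope ($L_1$-ball) is $C(\mathbf{c},r)=\{\mathbf{x}\in\mathbb{R}^n:\|\mathbf{x}-\mathbf{c}\|_1\le r\}$, where $\|\mathbf{u}\|_1=\sum_i|u_i|$. $P_{\mathbf{a}}=\mathrm{conv}\{\pm\mathbf{e}_1,\dots,\pm\mathbf{e}_n,\mathbf{a}\}=\mathrm{conv}(C(\mathbf{0},1)\cup\{\mathbf{a}\})$, with $\mathbf{e}_i$ the standard basis vectors. For a parameter $0<\beta<1$ and $k=0,1,2,\dots$, $Q_k=C((1-\beta^k)\mathbf{a},\beta^k)$. *)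

(* Defs.v *)
From HB Require Import structures.
From mathcomp Require Import all_boot all_order all_algebra.
From mathcomp Require Import all_classical all_reals all_analysis.
Set Implicit Arguments. Unset Strict Implicit. Unset Printing Implicit Defensive.
Import Order.TTheory GRing.Theory Num.Theory.
Local Open Scope classical_set_scope.
Local Open Scope ring_scope.

Section Defs.
Variables (R : realType) (n : nat).

Definition vec := 'I_n -> R.

Definition vadd (x y : vec) : vec := fun i => x i + y i.
Definition vsub (x y : vec) : vec := fun i => x i - y i.
Definition vscale (t : R) (x : vec) : vec := fun i => t * x i.

Definition basis_e (i : 'I_n) : vec := fun j => (i == j)%:R.

Definition l1norm (x : vec) : R := \sum_(i < n) `|x i|.

Definition cross_polytope (c : vec) (r : R) : set vec :=
  [set x | l1norm (vsub x c) <= r].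

Definition conv_hull (S : set vec) : set vec :=
  [set x | exists (m : nat) (lam : 'I_m -> R) (v : 'I_m -> vec),
     (forall j, 0 <= lam j) /\ \sum_(j < m) lam j = 1 /\
     (forall j, S (v j)) /\
     x = (fun i => \sum_(j < m) lam j * v j i)].

Definition box (a b : vec) : set vec := [set x | forall i, a i <= x i <= b i].
Definition box_vol (a b : vec) : R := \prod_(i < n) (b i - a i).

(* n-dimensional Lebesgue (outer) measure: infimum of total volumes of
   countable covers by closed boxes. *)
Definition vol (X : set vec) : \bar R :=
  ereal_inf [set s : \bar R | exists (a b : nat -> vec),
     (forall k i, a k i <= b k i) /\
     X `<=` \bigcup_k box (a k) (b k) /\
     s = (\sum_(0 <= k <oo) (box_vol (a k) (b k))%:E)%E].

End Defs.

Definition natvec (R : realType) (n : nat) (a : 'I_n -> nat) : vec R n :=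
  fun i => (a i)%:R.

Definition P_a (R : realType) (n : nat) (a : 'I_n -> nat) : set (vec R n) :=
  conv_hull [set v | (exists i, v = basis_e R i \/ v = vscale (-1) (basis_e R i))
                     \/ v = natvec R a].

Definition Q_k (R : realType) (n : nat) (a : 'I_n -> nat) (beta : R) (k : nat)
  : set (vec R n) :=
  cross_polytope (vscale (1 - beta ^+ k) (natvec R a)) (beta ^+ k).

(* Main.v *)
Require Import Defs.
From HB Require Import structures.
From mathcomp Require Import all_boot all_order all_algebra.
From mathcomp Require Import all_classical all_reals all_analysis.
From mathcomp Require Import lra ring.
Import Order.TTheory GRing.Theory Num.Theory.
Local Open Scope classical_set_scope.
Local Open Scope ring_scope.

Section Helpers.
Variables (R : realType) (n : nat).
Implicit Types (x y : vec R n).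

Lemma l1norm_ge0 x : 0 <= l1norm x.
Proof. by apply: sumr_ge0 => i _; exact: normr_ge0. Qed.

Lemma l1norm_add x y : l1norm (vadd x y) <= l1norm x + l1norm y.
Proof.
rewrite /l1norm /vadd -big_split /=; apply: ler_sum => i _; exact: ler_normD.
Qed.

Lemma l1norm_scale (c : R) x : l1norm (vscale c x) = `|c| * l1norm x.
Proof.
rewrite /l1norm /vscale mulr_sumr; apply: eq_bigr => i _; exact: normrM.
Qed.

Lemma l1norm_sum (m : nat) (f : 'I_m -> vec R n) :
  l1norm (fun i => \sum_(j < m) f j i) <= \sum_(j < m) l1norm (f j).
Proof.
rewrite /l1norm exchange_big /=; apply: ler_sum => i _; exact: ler_norm_sum.
Qed.

Lemma vol_ge0 (X : set (vec R n)) : (0 <= vol X)%E.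
Proof.
apply: le_ereal_inf_tmp => s [a [b [hab [_ ->]]]].
apply: nneseries_ge0 => k _ _; rewrite lee_fin /box_vol.
apply: prodr_ge0 => i _; rewrite subr_ge0; exact: hab.
Qed.

Lemma vol_mono (X Y : set (vec R n)) : X `<=` Y -> (vol X <= vol Y)%E.
Proof.
move=> XY; apply: ereal_inf_le_tmp => s [a [b [hab [hc ->]]]].
exists a, b; split => //; split => //; exact: subset_trans hc.
Qed.

Lemma vol_scale (rho : R) (X Y : set (vec R n)) : 0 < rho ->
  (forall x, X x -> Y (vscale rho x)) -> ((rho ^+ n)%:E * vol X <= vol Y)%E.
Proof.
move=> rp XY; apply: le_ereal_inf_tmp => s [a [b [hab [hc ->]]]].
have rip : 0 <= rho^-1 by rewrite invr_ge0 ltW.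
have h1 : (vol X <= \sum_(0 <= k <oo) ((rho^-1 ^+ n * box_vol (a k) (b k))%:E))%E.
  apply: ereal_inf_lbound; exists (fun k => vscale rho^-1 (a k)), (fun k => vscale rho^-1 (b k)).
  split; first by move=> k i; rewrite /vscale; apply: ler_wpM2l => //; exact: hab.
  split.
    move=> x Xx; have [k _ hk] := hc _ (XY _ Xx); exists k => // i.
    have /andP[h2 h3] := hk i; rewrite /vscale.
    have -> : x i = rho^-1 * (rho * x i) by rewrite mulrA mulVf ?mul1r // gt_eqF.
    by rewrite !ler_wpM2l.
  apply: eq_eseriesr => k _; congr (_%:E).
  rewrite /box_vol /vscale -[in rho^-1 ^+ n](card_ord n) -prodr_const -big_split /=.
  by apply: eq_bigr => i _; rewrite mulrBr.
rewrite (_ : \sum_(0 <= k <oo) _ = (rho^-1 ^+ n)%:E * \sum_(0 <= k <oo) (box_vol (a k) (b k))%:E)%E in h1; last first.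
  rewrite -nneseriesZl //; last first.
    move=> k _; rewrite lee_fin; apply: prodr_ge0 => i _; rewrite subr_ge0; exact: hab.
have h0 : (0 <= (rho ^+ n)%:E)%E by rewrite lee_fin exprn_ge0 // ltW.
move: (lee_wpmul2l h0 h1).
by rewrite muleA -EFinM -exprMn mulfV ?gt_eqF // expr1n mul1e.
Qed.

End Helpers.

Section Helpers2.
Variables (R : realType) (n : nat).
Implicit Types (x y : vec R n).

Lemma sum_basis (c : 'I_n -> R) k : \sum_i c i * basis_e R i k = c k.
Proof.
rewrite (bigD1 k) //= /basis_e eqxx mulr1 big1 ?addr0 // => i /negPf ->.
by rewrite mulr0.
Qed.

Lemma l1norm_basis (i : 'I_n) : l1norm (basis_e R i) = 1.
Proof.
rewrite /l1norm (bigD1 i) //= /basis_e eqxx normr1 big1 ?addr0 // => j.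
by rewrite eq_sym => /negPf ->; rewrite normr0.
Qed.

Lemma P_a_char (a : 'I_n -> nat) x : P_a a x ->
  exists mu, 0 <= mu <= 1 /\ l1norm (vsub x (vscale mu (natvec R a))) <= 1 - mu.
Proof.
move=> [m [lam [v [lam0 [lam1 [hv ->]]]]]].
pose A j := `[< v j = natvec R a >].
pose mu := \sum_(j < m) (if A j then lam j else 0).
have hsplit : \sum_(j < m) (if A j then lam j else 0) + \sum_(j < m) (if A j then 0 else lam j) = 1.
  by rewrite -big_split /= -lam1; apply: eq_bigr => j _; case: (A j); rewrite ?addr0 ?add0r.
exists mu; split.
  apply/andP; split; first by apply: sumr_ge0 => j _; case: (A j).
  rewrite -lam1; apply: ler_sum => j _; case: (A j) => //.
pose w j : vec R n := fun i => lam j * v j i - (if A j then lam j else 0) * natvec R a i.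
have -> : vsub (fun i => \sum_(j < m) lam j * v j i) (vscale mu (natvec R a)) =
   (fun i => \sum_(j < m) w j i).
  apply/funext => i; rewrite /vsub /vscale /w sumrB /mu mulr_suml //.
apply: le_trans; first exact: l1norm_sum.
have <- : \sum_(j < m) (if A j then 0 else lam j) = 1 - mu by rewrite -hsplit /mu; lra.
apply: ler_sum => j _; rewrite /w /A.
case: asboolP => [-> | nA].
  rewrite /l1norm big1 // => i _; by rewrite subrr normr0.
have -> : (fun i => lam j * v j i - 0 * natvec R a i) = vscale (lam j) (v j).
  by apply/funext => i; rewrite mul0r subr0.
rewrite l1norm_scale ger0_norm //.
case: (hv j) => [[i [-> | ->]] | //].
  by rewrite l1norm_basis mulr1.
by rewrite l1norm_scale normrN1 mul1r l1norm_basis mulr1.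
Qed.

End Helpers2.

Section Helpers3.
Variables (R : realType) (n : nat).
Implicit Types (x y : vec R n).

Lemma conv_fin (I : finType) (S : set (vec R n)) (lam : I -> R) (v : I -> vec R n) :
  (forall j, 0 <= lam j) -> \sum_j lam j = 1 -> (forall j, S (v j)) ->
  conv_hull S (fun i => \sum_j lam j * v j i).
Proof.
move=> l0 l1 hv.
exists #|@predT I|, (fun k => lam (enum_val k)), (fun k => v (enum_val k)).
split => //; split.
  by rewrite -(big_enum_val (A:=predT) lam).
split => //.
apply/funext => i.
by rewrite -(big_enum_val (A:=predT) (fun j => lam j * v j i)).
Qed.

Lemma sum_basisN (c : 'I_n -> R) k :
  \sum_i c i * vscale (-1) (basis_e R i) k = - c k.
Proof.
rewrite /vscale; under eq_bigr do rewrite mulN1r mulrN.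
by rewrite sumrN sum_basis.
Qed.

Lemma cross_in_P (a : 'I_n -> nat) (i0 : 'I_n) (mu : R) x :
  0 <= mu <= 1 -> l1norm (vsub x (vscale mu (natvec R a))) <= 1 - mu -> P_a a x.
Proof.
move=> /andP[mu0 mu1] hy.
set y := vsub x _ in hy.
set L := 1 - mu - l1norm y.
have L0 : 0 <= L by rewrite /L; lra.
pose lamF (s : ('I_n + 'I_n) + 'I_1) : R := match s with
  | inl (inl i) => (`|y i| + y i) / 2 + (i == i0)%:R * L / 2
  | inl (inr i) => (`|y i| - y i) / 2 + (i == i0)%:R * L / 2
  | inr _ => mu end.
pose vF (s : ('I_n + 'I_n) + 'I_1) : vec R n := match s with
  | inl (inl i) => basis_e R i
  | inl (inr i) => vscale (-1) (basis_e R i)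
  | inr _ => natvec R a end.
have -> : x = (fun k => \sum_s lamF s * vF s k).
  apply/funext => k; rewrite !big_sumType big_ord1 /= sum_basis sum_basisN.
  have : y k = x k - mu * natvec R a k by [].
  lra.
apply: conv_fin.
- have hd : forall i : 'I_n, 0 <= (i == i0)%:R * L / 2.
    by move=> i; apply: divr_ge0 => //; apply: mulr_ge0.
  have h1 := ler_norm (y _); have h2 := ler_norm (- y _).
  case=> [[i|i]|_] /=; last by [].
    apply: addr_ge0 => //; apply: divr_ge0 => //; move: (h2 i); rewrite normrN; lra.
  apply: addr_ge0 => //; apply: divr_ge0 => //; move: (h1 i); lra.
- rewrite !big_sumType big_ord1 /= -big_split /=.
  have e : forall i : 'I_n, (`|y i| + y i) / 2 + (i == i0)%:R * L / 2 +
     ((`|y i| - y i) / 2 + (i == i0)%:R * L / 2) = `|y i| + L * (i0 == i)%:R.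
    by move=> i; rewrite eq_sym; field.
  under eq_bigr do rewrite e.
  have hs : \sum_(i < n) L * (i0 == i)%:R = L.
    rewrite (bigD1 i0) //= eqxx mulr1 big1 ?addr0 // => i.
    by rewrite eq_sym => /negPf ->; rewrite mulr0.
  rewrite big_split /= hs /L /l1norm; lra.
- case=> [[i|i]|_] /=.
  + by left; exists i; left.
  + by left; exists i; right.
  + by right.
Qed.

End Helpers3.

Lemma bernoulli_le (R : realType) (m : nat) (d : R) : 0 <= d <= 1 ->
  1 - m%:R * d <= (1 - d) ^+ m.
Proof.
move=> /andP[d0 d1]; elim: m => [|m IH]; first by rewrite expr0 mul0r subr0.
rewrite exprSr -natr1.
have h : (1 - m%:R * d) * (1 - d) <= (1 - d) ^+ m * (1 - d).
  by apply: ler_wpM2r => //; lra.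
have hm : 0 <= m%:R * d * d by apply: mulr_ge0 => //; apply: mulr_ge0.
nra.
Qed.

Lemma exists_k (R : realType) (beta t : R) : 0 < beta < 1 -> 0 < t <= 1 ->
  exists k, beta ^+ k.+1 <= t <= beta ^+ k.
Proof.
move=> /andP[b0 b1] /andP[t0 t1].
have : exists N, beta ^+ N < t.
  have hc := @cvg_expr R beta; rewrite ger0_norm ?ltW // in hc.
  have [N _ HN] := cvgr_lt _ (hc b1) t t0.
  by exists N; apply: (HN N) => /=.
move=> [N HN].
have exP : exists k, beta ^+ k.+1 <= t.
  exists N; rewrite exprS; apply: ltW; apply: le_lt_trans HN.
  rewrite ler_piMl ?exprn_ge0 ?ltW //.
case: (ex_minnP exP) => k hk hmin; exists k; rewrite hk /=.
case: k hk hmin => [|j] hk hmin; first by rewrite expr0.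
rewrite leNgt; apply/negP => hlt.
by have := hmin j (ltW hlt); rewrite ltnn.
Qed.

Theorem mainTheorem2 (R : realType) (n : nat) (a : 'I_n -> nat) (beta eps c1 : R) :
  (exists i, a i <> 0%N) ->
  0 < beta < 1 ->
  0 < eps < 1 ->
  0 < c1 ->
  0 < c1 * eps < 1 ->
  1 - beta <= c1 * eps / (n%:R * (\sum_(i < n) a i)%N%:R) ->
  (((1 - c1 * eps)%:E * vol (@P_a R n a) <= vol (\bigcup_k Q_k a beta k))%E /\
   (vol (\bigcup_k Q_k a beta k) <= vol (@P_a R n a))%E).
Proof.
move=> [i0 ai0] /andP[b0 b1] _ _ /andP[ce0 ce1] hyp.
set A := (\sum_(i < n) a i)%N%:R : R.
have nge1 : 1 <= n%:R :> R.
  by rewrite ler1n; case: n a i0 {ai0 hyp A} => [|m] ? [].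
have Age1 : 1 <= A.
  rewrite /A ler1n (bigD1 i0) //=; move: ai0; case: (a i0) => //.
have normA : l1norm (natvec R a) = A.
  rewrite /l1norm /A natr_sum; apply: eq_bigr => i _; rewrite /natvec ger0_norm //.
have hyp2 : n%:R * ((1 - beta) * A) <= c1 * eps.
  move: hyp; rewrite ler_pdivlMr; last by apply: mulr_gt0; lra.
  by rewrite mulrC -mulrA [A * _]mulrC.
set d := (1 - beta) * A.
have d0 : 0 <= d by apply: mulr_ge0; [lra | exact: le_trans ler01 Age1].
have hd1 : d <= n%:R * d by rewrite ler_peMl.
set rho := 1 - d.
have rho0 : 0 < rho by rewrite /rho subr_gt0 (le_lt_trans hd1 (le_lt_trans hyp2 ce1)).
have hsub : \bigcup_k Q_k a beta k `<=` P_a a.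
  move=> x [k _ hk]; apply: (@cross_in_P R n a i0 (1 - beta ^+ k)).
    have := exprn_ge0 k (ltW b0); have := exprn_ile1 k (ltW b0) (ltW b1).
    move=> h1 h2; apply/andP; split; lra.
  by move: hk; rewrite /Q_k /cross_polytope /= opprB addrCA subrr addr0.
split; last exact: vol_mono.
apply: le_trans (@vol_scale R n rho (P_a a) _ rho0 _).
  apply: lee_wpmul2r; first exact: vol_ge0.
  rewrite lee_fin; apply: le_trans (@bernoulli_le R n d _); first by rewrite lerD2l lerN2.
  move: rho0; rewrite /rho => ?; apply/andP; split; lra.
move=> x /P_a_char [mu [/andP[mu0 mu1] hy]].
have dpos : 0 < d by apply: mulr_gt0; [lra | exact: lt_le_trans ltr01 Age1].
have rho1 : rho < 1 by rewrite /rho; lra.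
set t := 1 - rho * mu.
have hrm : rho * mu <= rho by rewrite -[X in _ <= X](mulr1 rho); apply: ler_wpM2l => //; exact: ltW.
have hrm0 : 0 <= rho * mu by apply: mulr_ge0 => //; exact: ltW.
have [k /andP[hk1 hk2]] : exists k, beta ^+ k.+1 <= t <= beta ^+ k.
  apply: exists_k; first by apply/andP.
  apply/andP; split; rewrite /t; lra.
exists k => //.
rewrite /Q_k /cross_polytope /=.
set y := vsub x _ in hy.
have -> : vsub (vscale rho x) (vscale (1 - beta ^+ k) (natvec R a)) =
   vadd (vscale (beta ^+ k - t) (natvec R a)) (vscale rho y).
  apply/funext => i; rewrite /vsub /vadd /vscale /y /t /vsub /vscale; ring.
apply: le_trans; first exact: l1norm_add.
rewrite !l1norm_scale normA (ger0_norm (ltW rho0)) ger0_norm; last lra.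
have hry : rho * l1norm y <= rho * (1 - mu) by apply: ler_wpM2l => //; exact: ltW.
set p := beta ^+ k.
have p1 : p <= 1 by apply: exprn_ile1; rewrite ltW.
have hk1' : beta * p <= t by rewrite -exprS.
have e1 : (p - t) * (A - 1) <= (1 - beta) * A.
  have hpt : p - t <= 1 - beta by nra.
  apply: le_trans (_ : (1 - beta) * (A - 1) <= _).
    by apply: ler_wpM2r; lra.
  nra.
move: hry e1; rewrite /t /rho /d; nra.
Qed.
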